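(* Assume $\ell=2$. Consider joint laws of $(Y^{(0)},Y^{(1)},D,Z)$ satisfying (Exclusion) $Y^{(d,0)}=Y^{(d,1)}$ a.s. (written $Y^{(d)}$), (Joint independence) $Z\perp(Y^{(0)},Y^{(1)})$, and (Outcome consistency) $Y=(1-D)Y^{(0)}+DY^{(1)}$. Then for every such law with observed law $\mathcal P$ of $(Y,D,Z)$, $$\max_{\mathbf v\in\mathcal V}\mathbf v^\top\mathbf p\le \mathbb E[Y^{(1)}-Y^{(0)}]\le-\max_{\mathbf v\in\mathcal V}\mathbf v^\top\bar{\mathbf p},$$ and the bounds are sharp: for every observed law $\mathcal P$ arising from such a law, there exist such laws inducing $\mathcal P$ attaining the lower bound and the upper bound respectively.
   Context: $D\in\{0,1\}$ treatment; $Y$ outcome with values $\gamma_0<\dots<\gamma_{n-1}$; instrument $Z\in\{0,1\}$ with $\mathcal P(Z=z)>0$; $[n]=\{0,\dots,n-1\}$; $Y^{(d,z)}$ potential outcomes. Vectors $\mathbf p,\bar{\mathbf p}\in\mathbb R^{4n}$: $p_{ydz}=\mathcal P(Y=\gamma_y,D=d\mid Z=z)$, $\bar p_{ydz}=p_{y(1-d)z}$, and $\mathbf v^\top\mathbf p=\sum_{y,d,z}v_{ydz}p_{ydz}$. $\mathcal V=\{\mathbf u(\mathbf B):\mathbf B\in S\}$, where $S=S_1\cup S_2\cup S_3\subseteq\{0,1\}^{n\times2\times2}$: $\mathbf B\in S_1$ iff some $t\in\{0,\dots,n-2\}$ has $B_{i00}=B_{i01}=1$ for $i\ge t$ and $B_{i00}\ne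 B_{i01}$ for $i<t$, $B_{i10}\ne B_{i11}$ for all $i$, and some $i,j$ have $B_{i10}=B_{j11}=1$; $\mathbf B\in S_2$ iff $B_{(n-1)00}=B_{(n-1)01}=B_{010}=B_{011}=1$, $B_{i00}\ne B_{i01}$ for $i<n-1$, $B_{j10}\ne B_{j11}$ for $j>0$; $\mathbf B\in S_3$ iff some $t\in\{1,\dots,n-1\}$ has $B_{i10}=B_{i11}=1$ for $i\le t$ and $B_{i10}\ne B_{i11}$ for $i>t$, $B_{i00}\ne B_{i01}$ for all $i$, and some $i,j$ have $B_{i00}=B_{j01}=1$. With $\alpha=-\gamma_0-\gamma_t$ on $S_1$, $-\gamma_0-\gamma_{n-1}$ on $S_2$, $-\gamma_t-\gamma_{n-1}$ on $S_3$: $u_{i00}=-\gamma_i-\alpha$ if $B_{i00}=1$ else $\gamma_0$; $u_{i10}=\gamma_i$ if $B_{i10}=1$ else $-\gamma_{n-1}-\alpha$; $u_{i01}=-\gamma_i$ if $B_{i01}=1$ else $\gamma_0+\alpha$; $u_{i11}=\gamma_i+\alpha$ if $B_{i11}=1$ else $-\gamma_{n-1}$. *)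

(* Defs.v *)
From mathcomp Require Import all_boot all_order all_algebra.
Set Implicit Arguments. Unset Strict Implicit. Unset Printing Implicit Defensive.
Import Order.TTheory GRing.Theory Num.Theory.
Local Open Scope ring_scope.

Section Defs.
Variables (R : realFieldType) (n : nat).

(* A joint law of (Y^(0), Y^(1), D, Z): q a b d z = P(Y^(0)=gamma_a, Y^(1)=gamma_b, D=d, Z=z).
   Booleans encode D and Z (false = 0, true = 1). *)
Definition law := 'I_n -> 'I_n -> bool -> bool -> R.

Definition PZ (q : law) (z : bool) : R :=
  \sum_(a < n) \sum_(b < n) \sum_(d : bool) q a b d z.
Definition PY01 (q : law) (a b : 'I_n) : R :=
  \sum_(d : bool) \sum_(z : bool) q a b d z.
Definition PY01Z (q : law) (a b : 'I_n) (z : bool) : R :=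
  \sum_(d : bool) q a b d z.

Definition valid_law (q : law) : Prop :=
  [/\ forall a b d z, 0 <= q a b d z,
      \sum_(a < n) \sum_(b < n) \sum_(d : bool) \sum_(z : bool) q a b d z = 1,
      forall z, 0 < PZ q z
    & forall a b z, PY01Z q a b z = PY01 q a b * PZ q z].

(* Observed joint law of (Y, D, Z) under outcome consistency
   Y = (1-D) Y^(0) + D Y^(1):  P(Y = gamma_y, D = d, Z = z). *)
Definition obs_joint (q : law) (y : 'I_n) (d z : bool) : R :=
  \sum_(a < n) \sum_(b < n)
     (if (if d then b else a) == y then q a b d z else 0).

Definition vec := 'I_n -> bool -> bool -> R.

Definition pvec (q : law) : vec := fun y d z => obs_joint q y d z / PZ q z.
Definition pbar (p : vec) : vec := fun y d z => p y (~~ d) z.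
Definition dot (v p : vec) : R :=
  \sum_(y < n) \sum_(d : bool) \sum_(z : bool) v y d z * p y d z.

Definition ATE (gamma : nat -> R) (q : law) : R :=
  \sum_(a < n) \sum_(b < n) \sum_(d : bool) \sum_(z : bool)
     q a b d z * (gamma b - gamma a).

Definition bmat := 'I_n -> bool -> bool -> bool.

Definition inS1 (B : bmat) (t : nat) : Prop :=
  [/\ (t.+2 <= n)%N,
      forall i : 'I_n, (t <= i)%N -> B i false false /\ B i false true,
      forall i : 'I_n, (i < t)%N -> B i false false != B i false true,
      forall i : 'I_n, B i true false != B i true true
    & exists i j : 'I_n, B i true false /\ B j true true].

Definition inS2 (B : bmat) : Prop :=
  forall i : 'I_n,
    [/\ nat_of_ord i = n.-1 -> B i false false /\ B i false true,
        nat_of_ord i = 0%N -> B i true false /\ B i true true,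
        (i < n.-1)%N -> B i false false != B i false true
      & (0 < i)%N -> B i true false != B i true true].

Definition inS3 (B : bmat) (t : nat) : Prop :=
  [/\ (1 <= t)%N /\ (t <= n.-1)%N,
      forall i : 'I_n, (i <= t)%N -> B i true false /\ B i true true,
      forall i : 'I_n, (t < i)%N -> B i true false != B i true true,
      forall i : 'I_n, B i false false != B i false true
    & exists i j : 'I_n, B i false false /\ B j false true].

Definition uvec (gamma : nat -> R) (B : bmat) (alpha : R) : vec :=
  fun i d z =>
    match d, z with
    | false, false => if B i false false then - gamma i - alpha else gamma 0%N
    | true, false => if B i true false then gamma i else - gamma n.-1 - alpha
    | false, true => if B i false true then - gamma i else gamma 0%N + alpha
    | true, true => if B i true true then gamma i + alpha else - gamma n.-1
    end.

Definition inV (gamma : nat -> R) (v : vec) : Prop :=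
  exists B : bmat,
    (exists t, inS1 B t /\ v = uvec gamma B (- gamma 0%N - gamma t))
    \/ (inS2 B /\ v = uvec gamma B (- gamma 0%N - gamma n.-1))
    \/ (exists t, inS3 B t /\ v = uvec gamma B (- gamma t - gamma n.-1)).

Definition is_max (P : vec -> Prop) (f : vec -> R) (m : R) : Prop :=
  (exists v, P v /\ f v = m) /\ (forall v, P v -> f v <= m).

End Defs.

(* Main.v *)
Require Import Defs.
From mathcomp Require Import all_boot all_order all_algebra.
From mathcomp Require Import ring lra zify.
Set Implicit Arguments. Unset Strict Implicit. Unset Printing Implicit Defensive.
Import Order.TTheory GRing.Theory Num.Theory.
Local Open Scope ring_scope.

(* Proof of the sharp bounds via an explicit dual certificate
   (weak duality) and an explicit primal construction (greedy allocation of
   never-takers / always-takers). *)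



Section PartA.
Variables (R : realFieldType) (n : nat) (gamma : nat -> R).
Hypothesis hmono : forall i j : nat, (i <= j)%N -> (j < n.+1)%N -> gamma i <= gamma j.

Lemma max_add_le (x y z w c : R) :
  x + z <= c -> x + w <= c -> y + z <= c -> y + w <= c ->
  Num.max x y + Num.max z w <= c.
Proof.
by case: (leP x y) => _; case: (leP z w) => _.
Qed.

Lemma uvec_dual (B : bmat n.+1) (al : R) :
  (forall a : 'I_n.+1, (B a false false && B a false true -> 0 <= gamma 0 + gamma a + al)
     /\ (~~ (B a false false && B a false true) -> gamma 0 + gamma a + al <= 0)) ->
  (forall b : 'I_n.+1, (B b true false && B b true true -> gamma b + gamma n + al <= 0)
     /\ (~~ (B b true false && B b true true) -> 0 <= gamma b + gamma n + al)) ->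
  forall a b : 'I_n.+1,
    Num.max (uvec gamma B al a false false) (uvec gamma B al b true false)
  + Num.max (uvec gamma B al a false true) (uvec gamma B al b true true)
  <= gamma b - gamma a.
Proof.
move=> HA HB a b.
have g0b : gamma 0 <= gamma b by apply: hmono.
have gan : gamma a <= gamma n by apply: hmono; [exact: ltn_ord a|].
have [HA1 HA2] := HA a; have [HB1 HB2] := HB b.
rewrite /uvec /=.
case: (B a false false) HA1 HA2; case: (B a false true);
case: (B b true false) HB1 HB2; case: (B b true true) => /= HB1 HB2 HA1 HA2;
  apply: max_add_le;
  repeat match goal with
  | H : true -> _ |- _ => specialize (H isT)
  | H : is_true true -> _ |- _ => specialize (H isT)
  | H : is_true false -> _ |- _ => clear H
  | H : false -> _ |- _ => clear H
  end.
all: lra.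
Qed.


Definition dualA (B : bmat n.+1) (al : R) :=
  forall a : 'I_n.+1, (B a false false && B a false true -> 0 <= gamma 0 + gamma a + al)
     /\ (~~ (B a false false && B a false true) -> gamma 0 + gamma a + al <= 0).
Definition dualB (B : bmat n.+1) (al : R) :=
  forall b : 'I_n.+1, (B b true false && B b true true -> gamma b + gamma n + al <= 0)
     /\ (~~ (B b true false && B b true true) -> 0 <= gamma b + gamma n + al).

Lemma inV_dual (v : vec R n.+1) : inV gamma v ->
  exists B al, [/\ v = uvec gamma B al, dualA B al & dualB B al].
Proof.
case=> B [[t [[ht Hge Hlt Hx Hex] ->]] | [[H2 ->] | [t [[[ht1 ht2] Hle Hgt Hx Hex] ->]]]];
  exists B; eexists; split; try reflexivity.
- move=> a; split.
  + case/andP=> h1 h2.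
    have ta : (t <= a)%N.
      rewrite leqNgt; apply/negP => /Hlt; by rewrite h1 h2.
    have := hmono ta (ltn_ord a); lra.
  + move=> hn.
    have ta : (a <= t)%N.
      apply: ltnW; rewrite ltnNge; apply/negP => /Hge [h1 h2]; by rewrite h1 h2 in hn.
    have := hmono ta (ltnW ht : (t < n.+1)%N); lra.
- move=> b; split.
  + by case/andP=> h1 h2; move: (Hx b); rewrite h1 h2.
  + move=> _.
    have h1 : gamma 0 <= gamma b by apply: hmono.
    have h2 : gamma t <= gamma n by apply: hmono; lia.
    lra.
- move=> a; have [h1 h2 h3 h4] := H2 a; split.
  + case/andP=> e1 e2.
    have an : nat_of_ord a = n.
      apply/eqP; rewrite eqn_leq -ltnS ltn_ord /= leqNgt; apply/negP => /h3.
      by rewrite e1 e2.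
    rewrite an; lra.
  + move=> _; have := @hmono a n (ltn_ord a) (ltnSn n); lra.
- move=> b; have [h1 h2 h3 h4] := H2 b; split.
  + case/andP=> e1 e2.
    have b0 : nat_of_ord b = 0%N.
      apply/eqP; rewrite -leqn0 leqNgt; apply/negP => /h4.
      by rewrite e1 e2.
    rewrite b0; lra.
  + move=> _; have : gamma 0 <= gamma b by apply: hmono.
    lra.
- move=> a; split.
  + by case/andP=> h1 h2; move: (Hx a); rewrite h1 h2.
  + move=> _.
    have h1 : gamma 0 <= gamma t by apply: hmono.
    have h2 : gamma a <= gamma n by apply: hmono; [exact: ltn_ord a|].
    lra.
- move=> b; split.
  + case/andP=> h1 h2.
    have tb : (b <= t)%N.
      rewrite leqNgt; apply/negP => /Hgt; by rewrite h1 h2.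
    have := hmono tb (leq_ltn_trans ht2 (ltnSn n)); lra.
  + move=> hn.
    have tb : (t <= b)%N.
      apply: ltnW; rewrite ltnNge; apply/negP => /Hle [h1 h2]; by rewrite h1 h2 in hn.
    have := hmono tb (ltn_ord b); lra.
Qed.


Lemma sum_if_eq (I : finType) (s : I) (G : I -> R) :
  \sum_(y : I) (if s == y then G y else 0) = G s.
Proof. by rewrite -big_mkcond (big_pred1 s) // => y; rewrite /= eq_sym. Qed.

Lemma obs_sum (q : law R n.+1) (w : 'I_n.+1 -> R) d z :
  \sum_y w y * obs_joint q y d z =
  \sum_a \sum_b w (if d then b else a) * q a b d z.
Proof.
rewrite /obs_joint.
under eq_bigr => y _ do rewrite mulr_sumr.
rewrite exchange_big /=; apply: eq_bigr => a _.
under eq_bigr => y _ do rewrite mulr_sumr.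
rewrite exchange_big /=; apply: eq_bigr => b _.
rewrite -(sum_if_eq (if d then b else a) (fun y => w y * q a b d z)).
by apply: eq_bigr => y _; case: eqP => _; rewrite ?mulr0.
Qed.

Lemma dot_expand (q : law R n.+1) (v : vec R n.+1) :
  dot v (pvec q) = \sum_(z : bool)
    (\sum_a \sum_b (v a false z * q a b false z + v b true z * q a b true z)) / PZ q z.
Proof.
rewrite /dot /pvec exchange_big /=.
under eq_bigr => d _ do rewrite exchange_big /=.
rewrite exchange_big /=; apply: eq_bigr => z _.
have E d : \sum_y v y d z * (obs_joint q y d z / PZ q z) =
   (\sum_a \sum_b v (if d then b else a) d z * q a b d z) / PZ q z.
  by rewrite -(obs_sum q (fun y => v y d z)) mulr_suml; apply: eq_bigr => y _; rewrite mulrA.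
rewrite big_bool /= !E /= -mulrDl; congr (_ / _).
rewrite -big_split; apply: eq_bigr => a _; rewrite -big_split; apply: eq_bigr => b _.
by rewrite addrC.
Qed.

Lemma ATE_mu (q : law R n.+1) :
  ATE gamma q = \sum_a \sum_b PY01 q a b * (gamma b - gamma a).
Proof.
rewrite /ATE /PY01; apply: eq_bigr => a _; apply: eq_bigr => b _.
rewrite mulr_suml; apply: eq_bigr => d _; by rewrite mulr_suml.
Qed.

Lemma lower_valid (q : law R n.+1) (B : bmat n.+1) (al : R) :
  valid_law q -> dualA B al -> dualB B al ->
  dot (uvec gamma B al) (pvec q) <= ATE gamma q.
Proof.
case=> hq0 hq1 hpz hind HA HB.
set v := uvec gamma B al.
pose M z (a b : 'I_n.+1) := Num.max (v a false z) (v b true z).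
have step z : (\sum_a \sum_b (v a false z * q a b false z + v b true z * q a b true z))
   / PZ q z <= \sum_a \sum_b M z a b * PY01 q a b.
  rewrite ler_pdivrMr // mulr_suml; apply: ler_sum => a _.
  rewrite mulr_suml; apply: ler_sum => b _.
  rewrite -mulrA -hind /PY01Z big_bool /= mulrDr addrC.
  apply: lerD; apply: ler_wpM2r => //; rewrite /M ?le_max lexx ?orbT //.
rewrite dot_expand ATE_mu.
apply: (le_trans (ler_sum _ (fun z _ => step z))).
rewrite exchange_big /=; apply: ler_sum => a _.
rewrite exchange_big /=; apply: ler_sum => b _.
rewrite big_bool /= -mulrDl mulrC.
apply: ler_wpM2l.
  by rewrite /PY01; apply: sumr_ge0 => d _; apply: sumr_ge0 => z _.
rewrite /M addrC; exact: uvec_dual.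
Qed.

End PartA.



Section PartC.
Variables (R : realFieldType) (n : nat) (gamma : nat -> R).

Lemma sum_ind0 (F : 'I_n.+1 -> R) :
  \sum_(b : 'I_n.+1) ((nat_of_ord b == 0%N)%:R * F b) = F ord0.
Proof.
rewrite big_ord_recl /= mul1r big1 ?addr0 // => i _.
by rewrite /bump /= mul0r.
Qed.

Lemma sum_indn (F : 'I_n.+1 -> R) :
  \sum_(b : 'I_n.+1) ((nat_of_ord b == n)%:R * F b) = F ord_max.
Proof.
rewrite big_ord_recr /= eqxx mul1r big1 ?add0r // => i _.
by rewrite (ltn_eqF (ltn_ord i)) mul0r.
Qed.

Lemma coupling (x y : 'I_n.+1 -> R) :
  (forall i, 0 <= x i) -> (forall i, 0 <= y i) -> \sum_i x i = \sum_i y i ->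
  (forall a, \sum_b x a * y b / \sum_i x i = x a) /\
  (forall b, \sum_a x a * y b / \sum_i x i = y b).
Proof.
move=> hx hy hs.
have [m0|m0] := eqVneq (\sum_i x i) 0.
  have x0 a : x a = 0 by apply: (psumr_eq0P (fun i _ => hx i) m0).
  have y0 b : y b = 0 by rewrite hs in m0; apply: (psumr_eq0P (fun i _ => hy i) m0).
  by split=> c; rewrite big1 ?x0 ?y0 // => i _; rewrite ?x0 ?y0 ?mul0r ?mulr0.
split=> c.
  by rewrite -mulr_suml -mulr_sumr -hs mulfK.
by rewrite -mulr_suml -mulr_suml mulrAC mulfV ?mul1r.
Qed.

Lemma coupling_ate (x y : 'I_n.+1 -> R) :
  (forall i, 0 <= x i) -> (forall i, 0 <= y i) -> \sum_i x i = \sum_i y i ->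
  \sum_(a : 'I_n.+1) \sum_(b : 'I_n.+1) (x a * y b / \sum_i x i) * (gamma b - gamma a)
  = \sum_(i : 'I_n.+1) (gamma i * y i - gamma i * x i).
Proof.
move=> hx hy hs; have [c1 c2] := coupling hx hy hs.
rewrite sumrB.
have -> : \sum_a \sum_b (x a * y b / \sum_i x i) * (gamma b - gamma a) =
   \sum_a \sum_b (x a * y b / \sum_i x i) * gamma b -
   \sum_a \sum_b (x a * y b / \sum_i x i) * gamma a.
  rewrite -sumrB; apply: eq_bigr => a _; rewrite -sumrB; apply: eq_bigr => b _.
  by rewrite mulrBr.
congr (_ - _).
  rewrite exchange_big /=; apply: eq_bigr => b _; by rewrite -mulr_suml c2 mulrC.
apply: eq_bigr => a _; by rewrite -mulr_suml c1 mulrC.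
Qed.


Lemma obs_selF (q : law R n.+1) y z :
  obs_joint q y false z = \sum_b q y b false z.
Proof.
rewrite /obs_joint /= -(sum_if_eq y (fun a => \sum_b q a b false z)).
apply: eq_bigr => a _; rewrite eq_sym; case: eqP => // _.
by rewrite big1.
Qed.

Lemma obs_selT (q : law R n.+1) y z :
  obs_joint q y true z = \sum_a q a y true z.
Proof.
rewrite /obs_joint /=; apply: eq_bigr => a _.
by rewrite -(sum_if_eq y (fun b => q a b true z)); apply: eq_bigr => b _; rewrite eq_sym.
Qed.

Lemma PZ_obs (q : law R n.+1) z :
  PZ q z = \sum_y (obs_joint q y false z + obs_joint q y true z).
Proof.
rewrite big_split /=.
have E d : \sum_y obs_joint q y d z = \sum_a \sum_b q a b d z.
  rewrite -[LHS](@eq_bigr _ _ _ _ _ _ (fun y => 1 * obs_joint q y d z)); last by move=> *; rewrite mul1r.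
  rewrite (obs_sum q (fun _ => 1)); apply: eq_bigr => a _; apply: eq_bigr => b _; by rewrite mul1r.
rewrite !E /PZ -big_split; apply: eq_bigr => a _; rewrite -big_split; apply: eq_bigr => b _.
by rewrite big_bool /= addrC.
Qed.

Lemma total_PZ (q : law R n.+1) :
  \sum_a \sum_b \sum_d \sum_z q a b d z = PZ q true + PZ q false.
Proof.
transitivity (\sum_(z : bool) \sum_a \sum_b \sum_d q a b d z); last by rewrite big_bool.
under eq_bigr => a _ do under eq_bigr => b _ do rewrite exchange_big.
under eq_bigr => a _ do rewrite exchange_big.
by rewrite exchange_big.
Qed.

Section Constr.
Variables (p : vec R n.+1) (pi : bool -> R) (N A : 'I_n.+1 -> R).
Hypotheses (hpi : forall z, 0 < pi z) (hpi1 : pi true + pi false = 1)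
  (hp0 : forall y d z, 0 <= p y d z)
  (hps : forall z, \sum_y (p y false z + p y true z) = 1)
  (hN : forall a, [/\ 0 <= N a, N a <= p a false false & N a <= p a false true])
  (hA : forall b, [/\ 0 <= A b, A b <= p b true false & A b <= p b true true])
  (hbal : \sum_i (N i - A i - p i false false + p i true true) = 0).

Definition Crow a := p a false false - N a.
Definition Ccol b := p b true true - A b.
Definition Drow a := p a false true - N a.
Definition Dcol b := p b true false - A b.
Definition Cm (a b : 'I_n.+1) := Crow a * Ccol b / \sum_i Crow i.
Definition Dm (a b : 'I_n.+1) := Drow a * Dcol b / \sum_i Drow i.
Definition rr (z : bool) (a b : 'I_n.+1) (d : bool) : R :=
  match z, d with
  | false, false => (nat_of_ord b == 0%N)%:R * N a + Cm a b
  | false, true => (nat_of_ord a == n)%:R * A b + Dm a b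
  | true, false => (nat_of_ord b == 0%N)%:R * N a + Dm a b
  | true, true => (nat_of_ord a == n)%:R * A b + Cm a b
  end.
Definition mu (a b : 'I_n.+1) :=
  (nat_of_ord b == 0%N)%:R * N a + (nat_of_ord a == n)%:R * A b + Cm a b + Dm a b.
Definition q1 : law R n.+1 := fun a b d z => pi z * rr z a b d.
Definition Fval := \sum_(i : 'I_n.+1) (N i * (gamma 0 + gamma i) - A i * (gamma i + gamma n)
   + gamma i * (p i true false + p i true true) - gamma i * (p i false false + p i false true)).

Lemma Crow0 i : 0 <= Crow i. Proof. by have [? ? ?] := hN i; rewrite subr_ge0. Qed.
Lemma Drow0 i : 0 <= Drow i. Proof. by have [? ? ?] := hN i; rewrite subr_ge0. Qed.
Lemma Ccol0 i : 0 <= Ccol i. Proof. by have [? ? ?] := hA i; rewrite subr_ge0. Qed.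
Lemma Dcol0 i : 0 <= Dcol i. Proof. by have [? ? ?] := hA i; rewrite subr_ge0. Qed.

Lemma sC : \sum_i Crow i = \sum_i Ccol i.
Proof.
apply/eqP; rewrite -subr_eq0 -sumrB -oppr_eq0 -sumrN -[X in _ == X]hbal; apply/eqP.
by apply: eq_bigr => i _; rewrite /Crow /Ccol; ring.
Qed.

Lemma sD : \sum_i Drow i = \sum_i Dcol i.
Proof.
apply/eqP; rewrite -subr_eq0 -sumrB; apply/eqP.
have : \sum_i (p i false true + p i true true) - \sum_i (p i false false + p i true false)
   - \sum_i (N i - A i - p i false false + p i true true) = 0.
  by rewrite hbal !hps; ring.
rewrite -!sumrB => h; rewrite -[RHS]h; apply: eq_bigr => i _; rewrite /Drow /Dcol; ring.
Qed.

Lemma Cm0 a b : 0 <= Cm a b.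
Proof. by rewrite /Cm divr_ge0 ?mulr_ge0 ?Crow0 ?Ccol0 ?sumr_ge0 // => i _; apply: Crow0. Qed.
Lemma Dm0 a b : 0 <= Dm a b.
Proof. by rewrite /Dm divr_ge0 ?mulr_ge0 ?Drow0 ?Dcol0 ?sumr_ge0 // => i _; apply: Drow0. Qed.

Lemma obs_q1 y d z : obs_joint q1 y d z = pi z * p y d z.
Proof.
have [c1 c2] := coupling Crow0 Ccol0 sC.
have [d1 d2] := coupling Drow0 Dcol0 sD.
case: d.
- rewrite obs_selT /q1 -mulr_sumr; congr (_ * _).
  case: z => /=; rewrite big_split /= sum_indn /=.
  + by rewrite [X in _ + X]c2 /Ccol; ring.
  + by rewrite [X in _ + X]d2 /Dcol; ring.
- rewrite obs_selF /q1 -mulr_sumr; congr (_ * _).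
  case: z => /=; rewrite big_split /=.
  + rewrite (sum_ind0 (fun _ => N y)) /= [X in _ + X]d1 /Drow; ring.
  + rewrite (sum_ind0 (fun _ => N y)) /= [X in _ + X]c1 /Crow; ring.
Qed.


Lemma rr_mu z a b : rr z a b true + rr z a b false = mu a b.
Proof. by case: z; rewrite /rr /mu; ring. Qed.

Lemma PY01Z_q1 a b z : PY01Z q1 a b z = pi z * mu a b.
Proof. by rewrite /PY01Z big_bool /q1 /= -mulrDr rr_mu. Qed.

Lemma PY01_q1 a b : PY01 q1 a b = mu a b.
Proof.
rewrite /PY01 exchange_big /=.
under eq_bigr => z _ do rewrite -/(PY01Z q1 a b z) PY01Z_q1.
by rewrite -mulr_suml big_bool /= hpi1 mul1r.
Qed.

Lemma PZ_q1 z : PZ q1 z = pi z.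
Proof.
rewrite PZ_obs.
under eq_bigr => y _ do rewrite !obs_q1 -mulrDr.
by rewrite -mulr_sumr hps mulr1.
Qed.

Lemma valid_q1 : valid_law q1.
Proof.
split.
- move=> a b d z; rewrite /q1; apply: mulr_ge0; first exact: ltW.
  have [? ? ?] := hN a; have [? ? ?] := hA b.
  by case: z; case: d; rewrite /rr; apply: addr_ge0; rewrite ?Cm0 ?Dm0 //;
    apply: mulr_ge0; rewrite ?ler0n.
- by apply: etrans; first exact: total_PZ; rewrite !PZ_q1.
- by move=> z; rewrite PZ_q1.
- by move=> a b z; rewrite PY01Z_q1 PY01_q1 PZ_q1 mulrC.
Qed.

Lemma ATE_q1 : ATE gamma q1 = Fval.
Proof.
rewrite ATE_mu.
under eq_bigr => a _ do under eq_bigr => b _ do rewrite PY01_q1.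
have [c1 c2] := coupling Crow0 Ccol0 sC.
have [d1 d2] := coupling Drow0 Dcol0 sD.
have E1 : \sum_(a : 'I_n.+1) \sum_(b : 'I_n.+1) (nat_of_ord b == 0%N)%:R * N a * (gamma b - gamma a)
   = \sum_(i : 'I_n.+1) N i * (gamma 0 - gamma i).
  apply: eq_bigr => a _.
  rewrite -(sum_ind0 (fun b : 'I_n.+1 => N a * (gamma b - gamma a))).
  by apply: eq_bigr => b _; rewrite mulrA.
have E2 : \sum_(a : 'I_n.+1) \sum_(b : 'I_n.+1) (nat_of_ord a == n)%:R * A b * (gamma b - gamma a)
   = \sum_(i : 'I_n.+1) A i * (gamma i - gamma n).
  rewrite exchange_big /=; apply: eq_bigr => b _.
  rewrite -(sum_indn (fun a : 'I_n.+1 => A b * (gamma b - gamma a))).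
  by apply: eq_bigr => a _; rewrite mulrA.
have E3 := coupling_ate Crow0 Ccol0 sC.
have E4 := coupling_ate Drow0 Dcol0 sD.
have -> : \sum_(a : 'I_n.+1) \sum_(b : 'I_n.+1) mu a b * (gamma b - gamma a) =
   \sum_(a : 'I_n.+1) \sum_(b : 'I_n.+1) (nat_of_ord b == 0%N)%:R * N a * (gamma b - gamma a)
 + \sum_(a : 'I_n.+1) \sum_(b : 'I_n.+1) (nat_of_ord a == n)%:R * A b * (gamma b - gamma a)
 + \sum_(a : 'I_n.+1) \sum_(b : 'I_n.+1) (Crow a * Ccol b / \sum_i Crow i) * (gamma b - gamma a)
 + \sum_(a : 'I_n.+1) \sum_(b : 'I_n.+1) (Drow a * Dcol b / \sum_i Drow i) * (gamma b - gamma a).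
  rewrite -!big_split /=; apply: eq_bigr => a _; rewrite -!big_split /=; apply: eq_bigr => b _.
  by rewrite /mu /Cm /Dm; ring.
rewrite E1 E2 E3 E4 /Fval -!big_split /=; apply: eq_bigr => i _.
by rewrite /Crow /Ccol /Drow /Dcol; ring.
Qed.

End Constr.
End PartC.



Section PartD.
Variables (R : realFieldType) (n : nat) (gamma : nat -> R).
Variables (p : vec R n.+1) (N A : 'I_n.+1 -> R) (regA regB : 'I_n.+1 -> bool) (al : R).

Definition Bsel : bmat n.+1 := fun i d z =>
  match d, z with
  | false, false => regA i || (p i false true <= p i false false)
  | false, true => regA i || ~~ (p i false true <= p i false false)
  | true, false => regB i || (p i true true <= p i true false)
  | true, true => regB i || ~~ (p i true true <= p i true false)
  end.

Hypotheses
  (hbal : \sum_i (N i - A i - p i false false + p i true true) = 0)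
  (HA : forall a : 'I_n.+1, (regA a -> N a * (gamma 0 + gamma a + al) = 0) /\
            (~~ regA a -> N a = Num.min (p a false false) (p a false true)))
  (HB : forall b : 'I_n.+1, (regB b -> A b * (gamma b + gamma n + al) = 0) /\
            (~~ regB b -> A b = Num.min (p b true false) (p b true true))).

Lemma dot_cert : dot (uvec gamma Bsel al) p = Fval gamma p N A.
Proof.
rewrite /dot /Fval.
transitivity (\sum_(i : 'I_n.+1) ((N i * (gamma 0 + gamma i) - A i * (gamma i + gamma n)
   + gamma i * (p i true false + p i true true) - gamma i * (p i false false + p i false true))
   + al * (N i - A i - p i false false + p i true true))); last first.
  by rewrite big_split /= -mulr_sumr hbal mulr0 addr0.
apply: eq_bigr => y _; rewrite !big_bool /=.
have eA : uvec gamma Bsel al y false true * p y false true +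
          uvec gamma Bsel al y false false * p y false false =
   N y * (gamma 0 + gamma y + al) - gamma y * p y false true - (gamma y + al) * p y false false.
  have [h1 h2] := HA y.
  rewrite /uvec /Bsel; case: (regA y) h1 h2 => /= h1 h2.
    by rewrite h1 //; ring.
  by rewrite h2 //; case: (leP (p y false true) (p y false false)) => hl /=; ring.
have eB : uvec gamma Bsel al y true true * p y true true +
          uvec gamma Bsel al y true false * p y true false =
   - A y * (gamma y + gamma n + al) + gamma y * p y true false + (gamma y + al) * p y true true.
  have [h1 h2] := HB y.
  rewrite /uvec /Bsel; case: (regB y) h1 h2 => /= h1 h2.
    by rewrite mulNr h1 //; ring.
  by rewrite h2 //; case: (leP (p y true true) (p y true false)) => hl /=; ring.
rewrite eA eB; ring.
Qed.

End PartD.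



Section Greedy.
Variable R : realFieldType.

Lemma prefix_mono (f : nat -> R) : (forall i, 0 <= f i) ->
  forall k j, (k <= j)%N -> \sum_(i < k) f i <= \sum_(i < j) f i.
Proof.
move=> hf k j kj; rewrite -(subnKC kj); elim: (j - k)%N => [|d IH]; first by rewrite addn0.
by rewrite addnS big_ord_recr /= -[X in X <= _]addr0; apply: lerD.
Qed.

Lemma clamp_step (T s f : R) : 0 <= f -> 0 <= T ->
  Num.min T s + Num.max 0 (Num.min f (T - s)) = Num.min T (s + f).
Proof.
move=> hf hT; case: (leP T s) => ?; case: (leP f (T - s)) => ?;
  case: (leP 0 f) => ?; case: (leP 0 (T - s)) => ?; case: (leP T (s + f)) => ?; lra.
Qed.

Lemma clamp_props (T s f : R) : 0 <= f ->
  [/\ 0 <= Num.max 0 (Num.min f (T - s)), Num.max 0 (Num.min f (T - s)) <= f,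
      (f <= T - s -> Num.max 0 (Num.min f (T - s)) = f)
    & (T - s <= 0 -> Num.max 0 (Num.min f (T - s)) = 0)].
Proof.
move=> hf; case: (leP f (T - s)) => ?; case: (leP 0 f) => ?; case: (leP 0 (T - s)) => ?;
  split; move=> *; lra.
Qed.

Lemma greedy (m : nat) (f : nat -> R) (T : R) :
  (forall i, 0 <= f i) -> 0 <= T -> T <= \sum_(i < m) f i -> (0 < m)%N ->
  exists (g : nat -> R) (t : nat),
    [/\ (t < m)%N, forall i, 0 <= g i /\ g i <= f i, \sum_(i < m) g i = T,
        forall i, (i < t)%N -> g i = f i
      & forall i, (t < i)%N -> (i < m)%N -> g i = 0].
Proof.
move=> hf hT hTm hm.
pose S k := \sum_(i < k) f i.
pose g i := Num.max 0 (Num.min (f i) (T - S i)).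
have gS k : \sum_(i < k) g i = Num.min T (S k).
  elim: k => [|k IH]; first by rewrite /S !big_ord0 /=; case: (leP T 0) => ?; lra.
  by rewrite big_ord_recr /= IH /S big_ord_recr /= -/(S k) /g clamp_step.
have exP : exists k, (m.-1 <= k)%N || (T < S k.+1) by exists m.-1; rewrite leqnn.
case: (ex_minnP exP) => t Pt tmin.
exists g, t; split.
- have := tmin m.-1; rewrite leqnn => /(_ isT); lia.
- by move=> i; have [? ? _ _] := clamp_props T (S i) (hf i).
- by rewrite gS /S; case: (leP T (\sum_(i < m) f i)) => ?; lra.
- move=> i it.
  have : ~~ ((m.-1 <= i)%N || (T < S i.+1)).
    by apply/negP => /tmin; rewrite leqNgt it.
  rewrite negb_or -leNgt => /andP [_ h].
  rewrite /S big_ord_recr /= -/(S i) in h.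
  have [_ _ e _] := clamp_props T (S i) (hf i); rewrite /g e //; lra.
- move=> i ti im.
  case/orP: Pt => [|h]; first by lia.
  have h2 : S t.+1 <= S i by apply: prefix_mono.
  have [_ _ _ e] := clamp_props T (S i) (hf i); rewrite /g e //; lra.
Qed.


Lemma greedy_rev (m : nat) (f : nat -> R) (T : R) :
  (forall i, 0 <= f i) -> 0 <= T -> T <= \sum_(i < m) f i -> (0 < m)%N ->
  exists (g : nat -> R) (t : nat),
    [/\ (t < m)%N, forall i, (i < m)%N -> 0 <= g i /\ g i <= f i, \sum_(i < m) g i = T,
        forall i, (t < i)%N -> (i < m)%N -> g i = f i
      & forall i, (i < t)%N -> g i = 0].
Proof.
move=> hf hT hTm hm.
have rev F : \sum_(i < m) F (m.-1 - i)%N = \sum_(i < m) F i :> R.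
  rewrite -(big_mkord xpredT F) big_rev_mkord subn0; apply: eq_bigr => i _.
  by congr F; lia.
have [g' [t' [ht' hg' hs' hlt' hgt']]] :
  exists (g : nat -> R) (t : nat),
    [/\ (t < m)%N, forall i, 0 <= g i /\ g i <= f (m.-1 - i)%N, \sum_(i < m) g i = T,
        forall i, (i < t)%N -> g i = f (m.-1 - i)%N
      & forall i, (t < i)%N -> (i < m)%N -> g i = 0].
  apply: greedy => //; try (by move=> i; apply: hf); by rewrite (rev f).
exists (fun i => g' (m.-1 - i)%N), (m.-1 - t')%N; split.
- lia.
- move=> i im; have [h1 h2] := hg' (m.-1 - i)%N; split=> //.
  by move: h2; have -> : (m.-1 - (m.-1 - i))%N = i by lia.
- by rewrite (rev g').
- move=> i ti im; rewrite hlt'; last by lia.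
  by have -> : (m.-1 - (m.-1 - i))%N = i by lia.
- by move=> i it; apply: hgt'; lia.
Qed.

End Greedy.



Section PartF.
Variables (R : realFieldType) (n : nat) (gamma : nat -> R).

Lemma minP3 (x y : R) :
  [/\ Num.min x y <= x, Num.min x y <= y, (0 <= x -> 0 <= y -> 0 <= Num.min x y),
      (x <= y -> Num.min x y = x) & (y <= x -> Num.min x y = y)].
Proof. by case: (leP x y) => h; split => // *; lra. Qed.

Lemma min_max_add (x y : R) : Num.min x y + Num.max x y = x + y.
Proof. by case: (leP x y) => _; ring. Qed.

Lemma sum_le_eq (u w : 'I_n.+1 -> R) :
  (forall i, u i <= w i) -> \sum_i u i = \sum_i w i -> forall i, u i = w i.
Proof.
move=> h hs i; apply/eqP; rewrite eq_sym -subr_eq0; apply/eqP.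
apply: (@psumr_eq0P _ _ xpredT (fun i => w i - u i)) => //.
  by move=> j _; rewrite subr_ge0.
by rewrite sumrB hs subrr.
Qed.

Variables (p : vec R n.+1) (N A : 'I_n.+1 -> R).
Hypotheses (hp0 : forall y d z, 0 <= p y d z)
  (hps : forall z, \sum_y (p y false z + p y true z) = 1)
  (hN : forall a, [/\ 0 <= N a, N a <= p a false false & N a <= p a false true])
  (hA : forall b, [/\ 0 <= A b, A b <= p b true false & A b <= p b true true])
  (hbal : \sum_i (N i - A i - p i false false + p i true true) = 0).

Definition Pm (a : 'I_n.+1) := Num.min (p a false false) (p a false true).
Definition Qm (b : 'I_n.+1) := Num.min (p b true false) (p b true true).

Lemma NlePm a : N a <= Pm a.
Proof. have [? ? ?] := hN a; rewrite /Pm; case: (leP (p a false false) (p a false true)) => //. Qed.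
Lemma AleQm b : A b <= Qm b.
Proof. have [? ? ?] := hA b; rewrite /Qm; case: (leP (p b true false) (p b true true)) => //. Qed.

Definition Good := exists regA regB al,
  inV gamma (uvec gamma (Bsel p regA regB) al) /\
  dot (uvec gamma (Bsel p regA regB) al) p = Fval gamma p N A.

Lemma S2_ok : (forall a : 'I_n.+1, (a < n)%N -> N a = Pm a) ->
  (forall b : 'I_n.+1, (0 < b)%N -> A b = Qm b) -> Good.
Proof.
move=> hNa hAb.
exists (fun a : 'I_n.+1 => nat_of_ord a == n), (fun b : 'I_n.+1 => nat_of_ord b == 0%N),
  (- gamma 0 - gamma n); split.
- exists (Bsel p (fun a : 'I_n.+1 => nat_of_ord a == n) (fun b : 'I_n.+1 => nat_of_ord b == 0%N)).
  right; left; split=> // i; split=> /=.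
  + by move=> ->; rewrite /Bsel eqxx.
  + by move=> ->; rewrite /Bsel eqxx.
  + by move=> h; rewrite /Bsel (ltn_eqF h) /=; case: (_ <= _).
  + by move=> h; rewrite /Bsel (gtn_eqF h) /=; case: (_ <= _).
- apply: dot_cert => //.
  + move=> a; split; first by move/eqP ->; ring.
    move=> h; apply: hNa; have := ltn_ord a; move: h; lia.
  + move=> b; split; first by move/eqP ->; ring.
    move=> h; apply: hAb; move: h; lia.
Qed.

Lemma S1_ok t : (t < n)%N -> (forall a : 'I_n.+1, (a < t)%N -> N a = Pm a) ->
  (forall a : 'I_n.+1, (t < a)%N -> N a = 0) -> (forall b, A b = Qm b) ->
  \sum_i N i < \sum_i Pm i -> Good.
Proof.
move=> ht hlt hgt hAQ hlt_sum.
have contra : forall x : 'I_n.+1 -> R, (forall i, Pm i <= x i) ->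
    \sum_i (x i - N i) = 0 -> False.
  move=> x hx hs.
  have e : forall i, N i = x i.
    apply: sum_le_eq => [i|]; first exact: le_trans (NlePm i) (hx i).
    by apply/eqP; rewrite eq_sym -subr_eq0 -sumrB hs.
  have : \sum_i N i = \sum_i Pm i.
    apply: eq_bigr => i _; apply/eqP; rewrite eq_le NlePm /= e; exact: hx.
  by move=> h; rewrite h ltxx in hlt_sum.
exists (fun a : 'I_n.+1 => (t <= a)%N), (fun _ => false), (- gamma 0 - gamma t); split.
- exists (Bsel p (fun a : 'I_n.+1 => (t <= a)%N) (fun _ => false)); left; exists t; split=> //.
  split=> //.
  + by move=> i h; rewrite /Bsel h.
  + by move=> i h; rewrite /Bsel leqNgt h /=; case: (_ <= _).
  + by move=> i; rewrite /Bsel /=; case: (_ <= _).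
  + case: (boolP [exists i, p i true true <= p i true false]) => [/existsP [i hi] | /existsPn H1].
      case: (boolP [exists j, ~~ (p j true true <= p j true false)]) => [/existsP [j hj] | /existsPn H2].
        by exists i, j; rewrite /Bsel /= hi hj.
      exfalso; apply: (contra (fun i => p i false false)).
        by move=> i'; have [] := minP3 (p i' false false) (p i' false true).
      have := sC hbal; rewrite /Crow => ->; apply: big1 => j _.
      rewrite /Ccol hAQ /Qm; have := H2 j; rewrite negbK => hj.
      by have [_ _ _ _ e] := minP3 (p j true false) (p j true true); rewrite e ?subrr.
    exfalso; apply: (contra (fun i => p i false true)).
      by move=> i'; have [] := minP3 (p i' false false) (p i' false true).
    have := sD hps hbal; rewrite /Drow => ->; apply: big1 => j _.
    rewrite /Dcol hAQ /Qm; have := H1 j; rewrite -ltNge => hj.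
    by have [_ _ _ e _] := minP3 (p j true false) (p j true true); rewrite e ?subrr // ltW.
- apply: dot_cert => //.
  + move=> a; split.
      move=> h; case: (ltngtP t a) h => // h' _.
        by rewrite hgt // mul0r.
      by rewrite -h'; ring.
    by move=> h; apply: hlt; rewrite ltnNge.
Qed.


Lemma S3_ok t : (0 < t)%N -> (t <= n)%N -> (forall a, N a = Pm a) ->
  (forall b : 'I_n.+1, (t < b)%N -> A b = Qm b) ->
  (forall b : 'I_n.+1, (b < t)%N -> A b = 0) ->
  \sum_i A i < \sum_i Qm i -> Good.
Proof.
move=> ht1 ht2 hNP hgt hlt hlt_sum.
have contra : forall x : 'I_n.+1 -> R, (forall i, Qm i <= x i) ->
    \sum_i (x i - A i) = 0 -> False.
  move=> x hx hs.
  have e : forall i, A i = x i.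
    apply: sum_le_eq => [i|]; first exact: le_trans (AleQm i) (hx i).
    by apply/eqP; rewrite eq_sym -subr_eq0 -sumrB hs.
  have : \sum_i A i = \sum_i Qm i.
    apply: eq_bigr => i _; apply/eqP; rewrite eq_le AleQm /= e; exact: hx.
  by move=> h; rewrite h ltxx in hlt_sum.
exists (fun _ => false), (fun b : 'I_n.+1 => (b <= t)%N), (- gamma t - gamma n); split.
- exists (Bsel p (fun _ => false) (fun b : 'I_n.+1 => (b <= t)%N)); right; right; exists t; split=> //.
  split=> //.
  + by move=> i h; rewrite /Bsel h.
  + by move=> i h; rewrite /Bsel leqNgt h /=; case: (_ <= _).
  + by move=> i; rewrite /Bsel /=; case: (_ <= _).
  + case: (boolP [exists i, p i false true <= p i false false]) => [/existsP [i hi] | /existsPn H1].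
      case: (boolP [exists j, ~~ (p j false true <= p j false false)]) => [/existsP [j hj] | /existsPn H2].
        by exists i, j; rewrite /Bsel /= hi hj.
      exfalso; apply: (contra (fun i => p i true false)).
        by move=> i'; have [] := minP3 (p i' true false) (p i' true true).
      have := sD hps hbal; rewrite /Dcol => <-; apply: big1 => j _.
      rewrite /Drow hNP /Pm; have := H2 j; rewrite negbK => hj.
      by have [_ _ _ _ e] := minP3 (p j false false) (p j false true); rewrite e ?subrr.
    exfalso; apply: (contra (fun i => p i true true)).
      by move=> i'; have [] := minP3 (p i' true false) (p i' true true).
    have := sC hbal; rewrite /Ccol => <-; apply: big1 => j _.
    rewrite /Crow hNP /Pm; have := H1 j; rewrite -ltNge => hj.
    by have [_ _ _ e _] := minP3 (p j false false) (p j false true); rewrite e ?subrr // ltW.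
- apply: dot_cert => //.
  move=> b; split.
    move=> h; case: (ltngtP b t) h => // h' _.
      by rewrite hlt // mul0r.
    by rewrite h'; ring.
  by move=> h; apply: hgt; rewrite ltnNge.
Qed.

End PartF.



Section PartG.
Variables (R : realFieldType) (n : nat) (gamma : nat -> R) (p : vec R n.+1).
Hypotheses (hp0 : forall y d z, 0 <= p y d z)
  (hps : forall z, \sum_y (p y false z + p y true z) = 1)
  (hivP : \sum_y Num.max (p y false false) (p y false true) <= 1)
  (hivQ : \sum_y Num.max (p y true false) (p y true true) <= 1).

Lemma Pm_props a : [/\ 0 <= Pm p a, Pm p a <= p a false false & Pm p a <= p a false true].
Proof.
by have [? ? h _ _] := minP3 (p a false false) (p a false true); split => //; apply: h.
Qed.
Lemma Qm_props a : [/\ 0 <= Qm p a, Qm p a <= p a true false & Qm p a <= p a true true].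
Proof.
by have [? ? h _ _] := minP3 (p a true false) (p a true true); split => //; apply: h.
Qed.

Lemma sum_inord (F : 'I_n.+1 -> R) :
  \sum_(i < n.+1) F (inord i) = \sum_i F i.
Proof. by apply: eq_bigr => i _; rewrite inord_val. Qed.

Lemma select : exists N A : 'I_n.+1 -> R,
  [/\ forall a, [/\ 0 <= N a, N a <= p a false false & N a <= p a false true],
      forall b, [/\ 0 <= A b, A b <= p b true false & A b <= p b true true],
      \sum_i (N i - A i - p i false false + p i true true) = 0
    & Good gamma p N A].
Proof.
set SFF := \sum_(i : 'I_n.+1) p i false false.
set SFT := \sum_(i : 'I_n.+1) p i false true.
set STF := \sum_(i : 'I_n.+1) p i true false.
set STT := \sum_(i : 'I_n.+1) p i true true.
set SPm := \sum_i Pm p i.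
set SQm := \sum_i Qm p i.
have h0 : SFF + STF = 1 by rewrite /SFF /STF -big_split hps.
have h1 : SFT + STT = 1 by rewrite /SFT /STT -big_split hps.
have hP : SFF + SFT - 1 <= SPm.
  have : SFF + SFT = SPm + \sum_y Num.max (p y false false) (p y false true).
    rewrite /SFF /SFT /SPm -!big_split /=; apply: eq_bigr => i _.
    by rewrite /Pm min_max_add.
  move=> hh; move: hivP; rewrite hh; lra.
have hQ : STF + STT - 1 <= SQm.
  have : STF + STT = SQm + \sum_y Num.max (p y true false) (p y true true).
    rewrite /STF /STT /SQm -!big_split /=; apply: eq_bigr => i _.
    by rewrite /Qm min_max_add.
  move=> hh; move: hivQ; rewrite hh; lra.
have bal_eq : forall N A : 'I_n.+1 -> R,
    \sum_i (N i - A i - p i false false + p i true true) =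
    \sum_i N i - \sum_i A i - SFF + STT.
  by move=> N A; rewrite big_split /= !sumrB.
have PmN i : 0 <= Pm p (inord i) by have [] := Pm_props (inord i).
have QmN i : 0 <= Qm p (inord i) by have [] := Qm_props (inord i).
case: (leP (SFF - STT + SQm) SPm) => hcase.
- have T0 : 0 <= SFF - STT + SQm by lra.
  have TP : SFF - STT + SQm <= \sum_(i < n.+1) Pm p (inord i) by rewrite sum_inord.
  have [g [t [ht hg hs hlt hgt]]] := greedy PmN T0 TP (ltn0Sn n).
  have hgP (a : 'I_n.+1) : g a <= Pm p a by have [_ +] := hg a; rewrite inord_val.
  have hb : \sum_(i : 'I_n.+1) (g i - Qm p i - p i false false + p i true true) = 0.
    by rewrite bal_eq hs; rewrite -/SQm; lra.
  have hNbox : forall a : 'I_n.+1, [/\ 0 <= g a, g a <= p a false false & g a <= p a false true].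
    move=> a; have [? ? ?] := Pm_props a; have [? _] := hg a; split => //; exact: le_trans (hgP a) _.
  exists (fun a : 'I_n.+1 => g a), (Qm p); split => //.
  + exact: Qm_props.
  case: (boolP ((t < n)%N && (\sum_(i : 'I_n.+1) g i < SPm))) => [/andP [tn hsum] | hneg].
  + apply: (S1_ok gamma hps hNbox hb tn) => //.
    * by move=> a at'; rewrite hlt // inord_val.
    * by move=> a ta; apply: hgt ta (ltn_ord a).
  + apply: (S2_ok gamma (p:=p) (N := fun a : 'I_n.+1 => g a) (A := Qm p) hb) => //.
    move=> a an.
    case: (ltnP t n) hneg => tn /=; last by move=> _; rewrite hlt ?inord_val //; apply: leq_trans an tn.
    rewrite -leNgt => hge.
    apply: (sum_le_eq hgP); apply/eqP; rewrite eq_le hge andbT.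
    by apply: ler_sum => i _; apply: hgP.
- have T0 : 0 <= SPm - (SFF - STT) by lra.
  have TQ : SPm - (SFF - STT) <= \sum_(i < n.+1) Qm p (inord i) by rewrite sum_inord -/SQm; lra.
  have [g [t [ht hg hs hgt hlt]]] := greedy_rev QmN T0 TQ (ltn0Sn n).
  have hgQ (b : 'I_n.+1) : g b <= Qm p b by have [_ +] := hg b (ltn_ord b); rewrite inord_val.
  have hb : \sum_(i : 'I_n.+1) (Pm p i - g i - p i false false + p i true true) = 0.
    by rewrite bal_eq hs; rewrite -/SPm; lra.
  have hAbox : forall b : 'I_n.+1, [/\ 0 <= g b, g b <= p b true false & g b <= p b true true].
    move=> b; have [? ? ?] := Qm_props b; have [? _] := hg b (ltn_ord b).
    split => //; exact: le_trans (hgQ b) _.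
  exists (Pm p), (fun b : 'I_n.+1 => g b); split => //.
  + exact: Pm_props.
  case: (posnP t) => [t0 | tpos].
  + apply: (S2_ok gamma (p:=p) (N := Pm p) (A := fun b : 'I_n.+1 => g b) hb) => //.
    move=> b bpos; rewrite hgt ?inord_val // t0 //.
  + apply: (S3_ok gamma hps hAbox hb tpos) => //.
    * by move=> b tb; rewrite hgt ?inord_val.
    * by move=> b bt; rewrite hlt.
    * by rewrite hs -/SQm; lra.
Qed.

End PartG.



Section PartH.
Variables (R : realFieldType) (n : nat) (gamma : nat -> R).
Hypothesis hmono : forall i j : nat, (i <= j)%N -> (j < n.+1)%N -> gamma i <= gamma j.

Lemma max_le (x y c : R) : x <= c -> y <= c -> Num.max x y <= c.
Proof. by case: (leP x y). Qed.

Lemma pvec_facts (q : law R n.+1) : valid_law q ->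
  [/\ forall y d z, 0 <= pvec q y d z,
      forall z, \sum_y (pvec q y false z + pvec q y true z) = 1,
      \sum_y Num.max (pvec q y false false) (pvec q y false true) <= 1,
      \sum_y Num.max (pvec q y true false) (pvec q y true true) <= 1
    & forall y d z, obs_joint q y d z = PZ q z * pvec q y d z].
Proof.
move=> hq; have [hq0 hq1 hpz hind] := hq.
have pz0 z : PZ q z != 0 by rewrite gt_eqF.
split.
- move=> y d z; rewrite /pvec divr_ge0 ?(ltW (hpz z)) //.
  rewrite /obs_joint; apply: sumr_ge0 => a _; apply: sumr_ge0 => b _; by case: eqP.
- move=> z; rewrite /pvec.
  under eq_bigr => y _ do rewrite -mulrDl.
  by rewrite -mulr_suml -PZ_obs mulfV.
- have bnd y z : pvec q y false z <= \sum_b PY01 q y b.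
    rewrite /pvec obs_selF ler_pdivrMr // mulr_suml; apply: ler_sum => b _.
    rewrite -hind /PY01Z big_bool /= -[X in X <= _]add0r lerD2r; exact: hq0.
  apply: (le_trans (ler_sum _ (fun y _ => max_le (bnd y false) (bnd y true)))).
  by rewrite -hq1 le_refl.
- have bnd y z : pvec q y true z <= \sum_a PY01 q a y.
    rewrite /pvec obs_selT ler_pdivrMr // mulr_suml; apply: ler_sum => a _.
    rewrite -hind /PY01Z big_bool /= -[X in X <= _]addr0 lerD2l; exact: hq0.
  apply: (le_trans (ler_sum _ (fun y _ => max_le (bnd y false) (bnd y true)))).
  by rewrite exchange_big /= -hq1 le_refl.
- by move=> y d z; rewrite /pvec mulrC divfK.
Qed.

Lemma lower_main (q : law R n.+1) : valid_law q ->
  exists L : R,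
    [/\ is_max (@inV R n.+1 gamma) (fun v => dot v (pvec q)) L,
        L <= ATE gamma q
      & exists q1 : law R n.+1, [/\ valid_law q1,
            (forall y d z, obs_joint q1 y d z = obs_joint q y d z)
          & ATE gamma q1 = L]].
Proof.
move=> hq; have [hp0 hps hivP hivQ hobs] := pvec_facts hq.
have [N [A [hN hA hb [regA [regB [al [hV hdot]]]]]]] := select gamma hp0 hps hivP hivQ.
have [hq0 hq1 hpz hind] := hq.
have hpi1 : PZ q true + PZ q false = 1 by rewrite -total_PZ.
set qq := q1 (pvec q) (PZ q) N A.
have vq : valid_law qq := valid_q1 hpz hpi1 hps hN hA hb.
have oq y d z : obs_joint qq y d z = obs_joint q y d z.
  by rewrite /qq obs_q1 // hobs.
have pzq z : PZ qq z = PZ q z by rewrite !PZ_obs; apply: eq_bigr => y _; rewrite !oq.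
have pv y d z : pvec qq y d z = pvec q y d z by rewrite /pvec oq pzq.
have dq v : dot v (pvec qq) = dot v (pvec q).
  by apply: eq_bigr => y _; apply: eq_bigr => d _; apply: eq_bigr => z _; rewrite pv.
have aq : ATE gamma qq = Fval gamma (pvec q) N A := ATE_q1 gamma hpi1 hps hN hA hb.
exists (Fval gamma (pvec q) N A); split.
- split; first by exists (uvec gamma (Bsel (pvec q) regA regB) al).
  move=> v hv; have [B [al' [-> hA' hB']]] := inV_dual hmono hv.
  by rewrite -dq -aq; apply: lower_valid.
- have [B [al' [e hA' hB']]] := inV_dual hmono hV.
  by rewrite -hdot e; apply: lower_valid.
- by exists qq.
Qed.

End PartH.



Section PartI.
Variables (R : realFieldType) (n : nat).

Definition sw (q : law R n.+1) : law R n.+1 := fun a b d z => q b a (~~ d) z.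

Lemma sum_negb (F : bool -> R) : \sum_(d : bool) F (~~ d) = \sum_(d : bool) F d.
Proof. by rewrite !big_bool /= addrC. Qed.

Lemma PZ_sw q z : PZ (sw q) z = PZ q z.
Proof.
rewrite /PZ /sw exchange_big /=; apply: eq_bigr => b _; apply: eq_bigr => a _.
exact: (sum_negb (fun d => q b a d z)).
Qed.

Lemma PY01Z_sw q a b z : PY01Z (sw q) a b z = PY01Z q b a z.
Proof. exact: (sum_negb (fun d => q b a d z)). Qed.

Lemma PY01_sw q a b : PY01 (sw q) a b = PY01 q b a.
Proof. exact: (sum_negb (fun d => \sum_z q b a d z)). Qed.

Lemma valid_sw q : valid_law q -> valid_law (sw q).
Proof.
case=> h0 h1 h2 h3; split.
- by move=> *; apply: h0.
- by apply: etrans; first exact: total_PZ; rewrite !PZ_sw -total_PZ.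
- by move=> z; rewrite PZ_sw.
- by move=> a b z; rewrite PY01Z_sw PY01_sw PZ_sw.
Qed.

Lemma obs_sw q y d z : obs_joint (sw q) y d z = obs_joint q y (~~ d) z.
Proof. by case: d; rewrite ?obs_selT ?obs_selF. Qed.

Lemma pvec_sw q y d z : pvec (sw q) y d z = pbar (pvec q) y d z.
Proof. by rewrite /pvec /pbar obs_sw PZ_sw. Qed.

Lemma ATE_sw (gamma : nat -> R) q : ATE gamma (sw q) = - ATE gamma q.
Proof.
rewrite !ATE_mu.
under eq_bigr => a _ do under eq_bigr => b _ do rewrite PY01_sw.
rewrite exchange_big /= -sumrN; apply: eq_bigr => i _.
rewrite -sumrN; apply: eq_bigr => j _; ring.
Qed.

End PartI.

Lemma is_max_ext (R : realFieldType) (n : nat) (P : vec R n -> Prop) (f g : vec R n -> R) m :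
  (forall v, f v = g v) -> is_max P f m -> is_max P g m.
Proof.
move=> e [[v [hv hf]] hm]; split; first by exists v; rewrite -e.
by move=> w hw; rewrite -e; apply: hm.
Qed.

Theorem theorem3 (R : realFieldType) (n : nat) (gamma : nat -> R)
  (hn : (0 < n)%N)
  (hgamma : forall i j : nat, (i < j)%N -> (j < n)%N -> gamma i < gamma j)
  (q : law R n) (hq : valid_law q) :
  exists L U : R,
    [/\ is_max (@inV R n gamma) (fun v => dot v (pvec q)) L,
        is_max (@inV R n gamma) (fun v => dot v (pbar (pvec q))) U,
        L <= ATE gamma q <= - U,
        (exists q1 : law R n, [/\ valid_law q1,
            (forall y d z, obs_joint q1 y d z = obs_joint q y d z)
          & ATE gamma q1 = L])
      & (exists q2 : law R n, [/\ valid_law q2,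
            (forall y d z, obs_joint q2 y d z = obs_joint q y d z)
          & ATE gamma q2 = - U])].
Proof.
case: n hn q hq hgamma => [//|n] _ q hq hgamma.
have hmono : forall i j : nat, (i <= j)%N -> (j < n.+1)%N -> gamma i <= gamma j.
  move=> i j; rewrite leq_eqVlt => /orP [/eqP -> //| ij] jn.
  exact: ltW (hgamma _ _ ij jn).
have [L [hL hLA [q1 [v1 o1 a1]]]] := lower_main hmono hq.
have [U [hU hUA [q2 [v2 o2 a2]]]] := lower_main hmono (valid_sw hq).
exists L, U; split.
- exact: hL.
- apply: is_max_ext hU => v.
  by apply: eq_bigr => y _; apply: eq_bigr => d _; apply: eq_bigr => z _; rewrite pvec_sw.
- rewrite ATE_sw in hUA; apply/andP; split => //; lra.
- by exists q1.
- exists (sw q2); split.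
  + exact: valid_sw.
  + by move=> y d z; rewrite obs_sw o2 obs_sw negbK.
  + by rewrite ATE_sw a2.
Qed.
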